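(* Let $\mathcal{K}$ be the fraction field of a discrete valuation ring $\mathscr{O}_{\mathcal{K}}$ with residue field $k$ and normalized discrete valuation $v:\mathcal{K}^\times\to\mathbf{Z}$. Let $E$ be an elliptic curve over $\mathcal{K}$ with potentially good reduction, and let $\Delta$ be the discriminant of a Weierstrass model of $E$ over $\mathcal{K}$. If $E$ has good reduction, then $v(\Delta) \equiv 0 \bmod 12$. Conversely, if $v(\Delta)\equiv 0 \bmod 12$ then $E$ has good reduction, provided that either (1) $\mathrm{char}(k) \neq 2, 3$, or (2) $\mathrm{char}(k)\neq 2$ and $E(\mathcal{K})[2] \neq O$.
   Context: $\Delta$ is well defined modulo $(\mathcal{K}^\times)^{12}$, independent of the choice of Weierstrass model. *)

(* Defs.v *)
From HB Require Import structures.
From mathcomp Require Import all_boot all_order all_algebra all_field.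
Set Implicit Arguments. Unset Strict Implicit. Unset Printing Implicit Defensive.
Import Order.TTheory GRing.Theory Num.Theory.
Local Open Scope ring_scope.

(* A normalized discrete valuation v : K^x -> Z (values at 0 are irrelevant). *)
Record dvaluation (K : fieldType) := DValuation {
  val_fun :> K -> int;
  valM : forall x y : K, x != 0 -> y != 0 -> val_fun (x * y) = val_fun x + val_fun y;
  valD : forall x y : K, x != 0 -> y != 0 -> x + y != 0 ->
           Num.min (val_fun x) (val_fun y) <= val_fun (x + y);
  val_normalized : exists pi : K, pi != 0 /\ val_fun pi = 1
}.

Definition in_valring (K : fieldType) (v : dvaluation K) (x : K) : bool :=
  (x == 0) || (0 <= v x).
Definition in_maxideal (K : fieldType) (v : dvaluation K) (x : K) : bool :=
  (x == 0) || (0 < v x).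

(* char(k) <> p for the residue field k = O_K / m : p * 1 is nonzero in k,
   i.e. p%:R does not lie in the maximal ideal. *)
Definition resid_char_neq (K : fieldType) (v : dvaluation K) (p : nat) : Prop :=
  ~~ in_maxideal v (p%:R : K).

(* Weierstrass equations y^2 + a1 xy + a3 y = x^3 + a2 x^2 + a4 x + a6. *)
Record wmodel (K : Type) := WModel { a1 : K; a2 : K; a3 : K; a4 : K; a6 : K }.

Section Weierstrass.
Variable K : fieldType.
Implicit Types W : wmodel K.

Definition b2 W := a1 W ^+ 2 + 4 * a2 W.
Definition b4 W := 2 * a4 W + a1 W * a3 W.
Definition b6 W := a3 W ^+ 2 + 4 * a6 W.
Definition b8 W := a1 W ^+ 2 * a6 W + 4 * a2 W * a6 W - a1 W * a3 W * a4 W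
                   + a2 W * a3 W ^+ 2 - a4 W ^+ 2.
Definition disc W := - b2 W ^+ 2 * b8 W - 8 * b4 W ^+ 3 - 27 * b6 W ^+ 2
                     + 9 * b2 W * b4 W * b6 W.

(* Standard change of coordinates x = u^2 x' + r, y = u^3 y' + s u^2 x' + t
   (Silverman, III.1 / Table 3.1), giving the new coefficients a_i'. *)
Definition change_coord W (u r s t : K) : wmodel K :=
  WModel
    ((a1 W + 2 * s) / u)
    ((a2 W - s * a1 W + 3 * r - s ^+ 2) / u ^+ 2)
    ((a3 W + r * a1 W + 2 * t) / u ^+ 3)
    ((a4 W - s * a3 W + 2 * r * a2 W - (t + r * s) * a1 W + 3 * r ^+ 2
       - 2 * s * t) / u ^+ 4)
    ((a6 W + r * a4 W + r ^+ 2 * a2 W + r ^+ 3 - t * a3 W - t ^+ 2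
       - r * t * a1 W) / u ^+ 6).

(* W' is a Weierstrass model (over K) of the same curve as W. *)
Definition wiso W W' : Prop :=
  exists u r s t : K, u != 0 /\ W' = change_coord W u r s t.

Definition on_curve W (x y : K) : bool :=
  y ^+ 2 + a1 W * x * y + a3 W * y ==
  x ^+ 3 + a2 W * x ^+ 2 + a4 W * x + a6 W.
Definition neg_y W (x y : K) : K := - y - a1 W * x - a3 W.

(* E(K)[2] <> O : there is a K-rational point P <> O with P = -P (i.e. 2P = O). *)
Definition has_nontriv_2torsion W : Prop :=
  exists x y : K, on_curve W x y /\ neg_y W x y = y.

Definition wmap (L : fieldType) (f : K -> L) W : wmodel L :=
  WModel (f (a1 W)) (f (a2 W)) (f (a3 W)) (f (a4 W)) (f (a6 W)).

End Weierstrass.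

Definition integral_model (K : fieldType) (v : dvaluation K) (W : wmodel K) :=
  [&& in_valring v (a1 W), in_valring v (a2 W), in_valring v (a3 W),
      in_valring v (a4 W) & in_valring v (a6 W)].

Definition good_reduction (K : fieldType) (v : dvaluation K) (W : wmodel K) : Prop :=
  exists W' : wmodel K, wiso W W' /\ integral_model v W' /\
    disc W' != 0 /\ v (disc W') = 0.

(* Potentially good reduction: good reduction over some finite extension L/K,
   with respect to a normalized discrete valuation w of L extending v
   (w|_K = e * v, ramification index e > 0). *)
Definition pot_good_reduction (K : fieldType) (v : dvaluation K) (W : wmodel K) : Prop :=
  exists (L : fieldExtType K) (w : dvaluation L) (e : nat),
    (0 < e)%N /\ (forall x : K, x != 0 -> w (x%:A) = (e%:Z * v x)%R) /\
    good_reduction w (wmap (fun x : K => x%:A : L) W).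

(* Main.v *)
Require Import Defs.
From HB Require Import structures.
From mathcomp Require Import all_boot all_order all_algebra all_field.
From mathcomp Require Import zify ring lra.
Import Order.TTheory GRing.Theory Num.Theory.
Set Implicit Arguments. Unset Strict Implicit.
Local Open Scope ring_scope.

Section Val.
Variables (K : fieldType) (v : dvaluation K).

Lemma v1 : v 1 = 0.
Proof. have := Defs.valM v (oner_neq0 K) (oner_neq0 K). rewrite mulr1 => h.
have : v 1 - v 1 = v 1 + v 1 - v 1 by rewrite -h. rewrite subrr addrK. by move=>->. Qed.

Lemma vM x y : x != 0 -> y != 0 -> v (x * y) = v x + v y.
Proof. exact: Defs.valM. Qed.

Lemma vN1 : v (-1) = 0.
Proof. have h1 : (-1 : K) != 0 by rewrite oppr_eq0 oner_neq0.
have := vM h1 h1. rewrite mulrNN mulr1 v1 => h. lia. Qed.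

Lemma vN x : x != 0 -> v (- x) = v x.
Proof. move=> hx. have h1 : (-1 : K) != 0 by rewrite oppr_eq0 oner_neq0.
by rewrite -mulN1r vM // vN1 add0r. Qed.

Lemma vV x : x != 0 -> v (x^-1) = - v x.
Proof. move=> hx. have := vM hx (invr_neq0 hx). rewrite mulfV // v1 => h. lia. Qed.

Lemma vX x n : x != 0 -> v (x ^+ n) = (n%:Z * v x).
Proof. move=> hx; elim: n => [|n IH]; first by rewrite expr0 v1 mul0r.
rewrite exprS vM ?expf_neq0 // IH. lia. Qed.

Lemma vdiv x y : x != 0 -> y != 0 -> v (x / y) = v x - v y.
Proof. move=> hx hy; rewrite vM ?invr_neq0 // vV //. Qed.

Definition integ x := in_valring v x.

Lemma integP x : x != 0 -> integ x = (0 <= v x).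
Proof. by rewrite /integ /in_valring => /negbTE ->. Qed.

Lemma integD x y : integ x -> integ y -> integ (x + y).
Proof.
have [->|hx] := eqVneq x 0; first by rewrite add0r.
have [->|hy] := eqVneq y 0; first by rewrite addr0.
have [->|hxy] := eqVneq (x + y) 0; first by rewrite /integ /in_valring eqxx.
rewrite !integP // => px py. have := Defs.valD v hx hy hxy.
apply: le_trans. by rewrite le_min px py.
Qed.

Lemma integN x : integ x -> integ (- x).
Proof. have [->|hx] := eqVneq x 0; first by rewrite oppr0.
by rewrite !integP ?oppr_eq0 // vN. Qed.

Lemma integB x y : integ x -> integ y -> integ (x - y).
Proof. by move=> hx hy; apply: integD => //; apply: integN. Qed.

Lemma integM x y : integ x -> integ y -> integ (x * y).
Proof.
have [->|hx] := eqVneq x 0; first by rewrite mul0r.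
have [->|hy] := eqVneq y 0; first by rewrite mulr0.
rewrite !integP ?mulf_neq0 // vM // => px py. by rewrite addr_ge0.
Qed.

Lemma integX x n : integ x -> integ (x ^+ n).
Proof. move=> hx; elim: n => [|n IH]; first by rewrite expr0 integP ?oner_neq0 // v1.
by rewrite exprS integM. Qed.

Lemma integn n : integ (n%:R).
Proof. elim: n => [|n IH]; first by rewrite /integ /in_valring eqxx.
rewrite -addn1 natrD; apply: integD => //. by rewrite integP ?oner_neq0 // v1. Qed.

Lemma integ1 : integ 1. Proof. by rewrite integP ?oner_neq0 // v1. Qed.
Lemma integ0 : integ 0. Proof. by rewrite /integ /in_valring eqxx. Qed.

Lemma integ_sq x : integ (x ^+ 2) -> integ x.
Proof. have [->|hx] := eqVneq x 0; first by rewrite integ0.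
rewrite !integP ?expf_neq0 // vX //. lia. Qed.

Lemma v_strict x y : x != 0 -> y != 0 -> v x < v y -> x + y != 0 /\ v (x + y) = v x.
Proof.
move=> hx hy lt.
have hxy : x + y != 0.
  apply/negP => /eqP h. have e : y = - x by apply: (addrI x); rewrite h subrr.
  move: lt; rewrite e vN // ltxx //.
split => //.
have h1 := Defs.valD v hx hy hxy.
have hny : - y != 0 by rewrite oppr_eq0.
have hs : (x + y) + - y != 0 by rewrite addrK.
have h2 := Defs.valD v hxy hny hs. rewrite addrK vN // in h2.
move: h1 h2; rewrite !ge_min => /orP [h1|h1] /orP [h2|h2].
- by apply/eqP; rewrite eq_le h1 h2.
- by move: lt; rewrite ltNge h2.
- by move: lt; rewrite ltNge (le_trans h1 h2).
- by move: lt; rewrite ltNge h2.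
Qed.

Lemma v_exists (z : int) : exists u : K, u != 0 /\ v u = z.
Proof.
have [pi [hpi vpi]] := val_normalized v.
case: z => n.
- exists (pi ^+ n); rewrite expf_neq0 // vX // vpi. split => //. lia.
- exists ((pi ^+ n.+1)^-1); rewrite invr_neq0 ?expf_neq0 // vV ?expf_neq0 // vX // vpi.
  split => //. rewrite NegzE. lia.
Qed.

End Val.

Definition c4 (K : fieldType) (W : wmodel K) := b2 W ^+ 2 - 24 * b4 W.
Definition c6 (K : fieldType) (W : wmodel K) := - b2 W ^+ 3 + 36 * b2 W * b4 W - 216 * b6 W.

Lemma c4c6 (K : fieldType) (W : wmodel K) : c4 W ^+ 3 - c6 W ^+ 2 = 1728 * disc W.
Proof. rewrite /c4 /c6 /disc /b2 /b4 /b6 /b8. ring. Qed.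


Lemma disc_scale (K : fieldType) (A1 A2 A3 A4 A6 u : K) : u != 0 ->
  disc (WModel (A1/u) (A2/u^+2) (A3/u^+3) (A4/u^+4) (A6/u^+6)) =
  disc (WModel A1 A2 A3 A4 A6) / u ^+ 12.
Proof. move=> hu. rewrite /disc /b2 /b4 /b6 /b8 /=. field. exact hu. Qed.

Lemma c4_scale (K : fieldType) (A1 A2 A3 A4 A6 u : K) : u != 0 ->
  c4 (WModel (A1/u) (A2/u^+2) (A3/u^+3) (A4/u^+4) (A6/u^+6)) =
  c4 (WModel A1 A2 A3 A4 A6) / u ^+ 4.
Proof. move=> hu. rewrite /c4 /b2 /b4 /b6 /b8 /=. field. exact hu. Qed.

Lemma c6_scale (K : fieldType) (A1 A2 A3 A4 A6 u : K) : u != 0 ->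
  c6 (WModel (A1/u) (A2/u^+2) (A3/u^+3) (A4/u^+4) (A6/u^+6)) =
  c6 (WModel A1 A2 A3 A4 A6) / u ^+ 6.
Proof. move=> hu. rewrite /c6 /b2 /b4 /b6 /b8 /=. field. exact hu. Qed.

Definition transl (K : fieldType) (W : wmodel K) (r s t : K) :=
  (WModel (a1 W + 2 * s) (a2 W - s * a1 W + 3 * r - s ^+ 2)
    (a3 W + r * a1 W + 2 * t)
    (a4 W - s * a3 W + 2 * r * a2 W - (t + r * s) * a1 W + 3 * r ^+ 2 - 2 * s * t)
    (a6 W + r * a4 W + r ^+ 2 * a2 W + r ^+ 3 - t * a3 W - t ^+ 2 - r * t * a1 W)).

Lemma disc_trans (K : fieldType) (W : wmodel K) r s t : disc (transl W r s t) = disc W.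
Proof. case: W => a1 a2 a3 a4 a6. rewrite /disc /b2 /b4 /b6 /b8 /=. ring. Qed.
Lemma c4_trans (K : fieldType) (W : wmodel K) r s t : c4 (transl W r s t) = c4 W.
Proof. case: W => a1 a2 a3 a4 a6. rewrite /c4 /b2 /b4 /b6 /b8 /=. ring. Qed.
Lemma c6_trans (K : fieldType) (W : wmodel K) r s t : c6 (transl W r s t) = c6 W.
Proof. case: W => a1 a2 a3 a4 a6. rewrite /c6 /b2 /b4 /b6 /b8 /=. ring. Qed.

Lemma change_eq (K : fieldType) (W : wmodel K) u r s t : change_coord W u r s t =
  WModel (a1 (transl W r s t) / u) (a2 (transl W r s t) / u^+2) (a3 (transl W r s t) / u^+3)
   (a4 (transl W r s t) / u^+4) (a6 (transl W r s t) / u^+6).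
Proof. by []. Qed.

Lemma disc_change (K : fieldType) (W : wmodel K) u r s t : u != 0 ->
  disc (change_coord W u r s t) = disc W / u ^+ 12.
Proof. move=> hu; rewrite change_eq -(disc_trans W r s t).
move: (transl W r s t) => [? ? ? ? ?]. by rewrite disc_scale. Qed.
Lemma c4_change (K : fieldType) (W : wmodel K) u r s t : u != 0 ->
  c4 (change_coord W u r s t) = c4 W / u ^+ 4.
Proof. move=> hu; rewrite change_eq -(c4_trans W r s t).
move: (transl W r s t) => [? ? ? ? ?]. by rewrite c4_scale. Qed.
Lemma c6_change (K : fieldType) (W : wmodel K) u r s t : u != 0 ->
  c6 (change_coord W u r s t) = c6 W / u ^+ 6.
Proof. move=> hu; rewrite change_eq -(c6_trans W r s t).
move: (transl W r s t) => [? ? ? ? ?]. by rewrite c6_scale. Qed.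

Lemma disc_map (K L : fieldType) (f : {rmorphism K -> L}) (W : wmodel K) :
  disc (wmap f W) = f (disc W).
Proof. rewrite /disc /b2 /b4 /b6 /b8 /=.
rewrite !(rmorphB, rmorphD, rmorphM, rmorphN, rmorphXn, rmorph_nat, rmorph1). ring. Qed.
Lemma c4_map (K L : fieldType) (f : {rmorphism K -> L}) (W : wmodel K) :
  c4 (wmap f W) = f (c4 W).
Proof. rewrite /c4 /b2 /b4 /b6 /b8 /=.
rewrite !(rmorphB, rmorphD, rmorphM, rmorphN, rmorphXn, rmorph_nat, rmorph1). ring. Qed.

Ltac integ_tac := repeat first [ assumption | apply: integB | apply: integD | apply: integM
  | apply: integX | apply: integN | apply: integn | apply: integ0 | apply: integ1 ].

Lemma c4_integ (K : fieldType) (v : dvaluation K) (W : wmodel K) :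
  integral_model v W -> integ v (c4 W).
Proof. case/and5P => h1 h2 h3 h4 h6. rewrite /c4 /b2 /b4. integ_tac. Qed.

Lemma jbound (K : fieldType) (v : dvaluation K) (W : wmodel K) :
  disc W != 0 -> pot_good_reduction v W ->
  c4 W = 0 \/ v (disc W) <= 3 * v (c4 W).
Proof.
move=> hD [L [w [e [he [hwv [W2 [[u [r [s [t [hu E]]]]] [hint [hd0 hd]]]]]]]]].
have hm : wmap (fun x : K => x%:A : L) W = wmap (in_alg L) W by [].
rewrite hm in E.
have [c0|c0] := eqVneq (c4 W) 0; [by left | right].
have hc := c4_integ hint.
have ec : c4 W2 = (in_alg L (c4 W)) / u ^+ 4 by rewrite E c4_change // c4_map.
have ed : disc W2 = (in_alg L (disc W)) / u ^+ 12 by rewrite E disc_change // disc_map.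
have c0' : in_alg L (c4 W) != 0 by rewrite fmorph_eq0.
have d0' : in_alg L (disc W) != 0 by rewrite fmorph_eq0.
have hc2 : c4 W2 != 0 by rewrite ec mulf_neq0 // invr_neq0 // expf_neq0.
rewrite integP // ec vdiv ?expf_neq0 // vX // in hc.
rewrite ed vdiv ?expf_neq0 // vX // in hd.
move: hc hd; rewrite !in_algE !hwv //.
move: he; set a := v (disc W); set b := v (c4 W); set c := w u.
move=> he h1 h2.
have : e%:Z * a <= e%:Z * (3 * b) by lia.
rewrite ler_pM2l //; lia.
Qed.

Lemma scaled (K : fieldType) (v : dvaluation K) (W : wmodel K) u r s t :
  u != 0 -> disc W != 0 -> v (disc W) = v u * 12 ->
  (c4 W = 0 \/ v (disc W) <= 3 * v (c4 W)) ->
  [/\ disc (change_coord W u r s t) != 0, v (disc (change_coord W u r s t)) = 0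
    & integ v (c4 (change_coord W u r s t))].
Proof.
move=> hu hD hv hj.
rewrite disc_change // c4_change //.
have hd : disc W / u ^+ 12 != 0 by rewrite mulf_neq0 // invr_neq0 // expf_neq0.
split => //; first by rewrite vdiv ?expf_neq0 // vX // hv; lia.
case: hj => [->|hj]; first by rewrite mul0r integ0.
have [c0|c0] := eqVneq (c4 W) 0; first by rewrite c0 mul0r integ0.
rewrite integP ?mulf_neq0 ?invr_neq0 ?expf_neq0 // vdiv ?expf_neq0 // vX //.
lia.
Qed.

Lemma resid_unit (K : fieldType) (v : dvaluation K) p :
  resid_char_neq v p -> p%:R != 0 :> K /\ v p%:R = 0.
Proof.
rewrite /resid_char_neq /in_maxideal negb_or => /andP [h0 h1].
have := integn v p. rewrite integP // => h2. split => //. move: h1 h2; rewrite -leNgt. lia.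
Qed.

Lemma integ_unitV (K : fieldType) (v : dvaluation K) x : x != 0 -> v x = 0 -> integ v (x^-1).
Proof. move=> hx h; rewrite integP ?invr_neq0 // vV // h. by []. Qed.

Lemma integ_div (K : fieldType) (v : dvaluation K) x y : integ v x -> y != 0 -> v y = 0 -> integ v (x / y).
Proof. move=> hx hy h; apply: integM => //; exact: integ_unitV. Qed.

Unset Implicit Arguments.

Theorem lemma2p1 (K : fieldType) (v : dvaluation K) (W : wmodel K) :
  disc W != 0 -> pot_good_reduction v W ->
  (good_reduction v W -> (12 %| v (disc W))%Z) /\
  ((12 %| v (disc W))%Z ->
     (resid_char_neq v 2 /\ resid_char_neq v 3) \/
     (resid_char_neq v 2 /\ has_nontriv_2torsion W) ->
     good_reduction v W).
Proof.
move=> hD hpot; split.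
  move=> [W' [[u [r [s [t [hu E]]]]] [hint [hd0 hd]]]].
  rewrite E disc_change // vdiv ?expf_neq0 // vX // in hd.
  apply/dvdzP; exists (v u). lia.
move=> /dvdzP [k hk] hcase.
have [lam [hl vl]] := v_exists v k.
have hj := jbound hD hpot.
case: hcase => [[h2 h3]|[h2 [x0 [y0 [hon hneg]]]]].
- have [n2 v2] := resid_unit h2.
  have [n3 v3] := resid_unit h3.
  have e6 : (6 : K) = 2 * 3 by rewrite -natrM.
  have n6 : (6 : K) != 0 by rewrite e6 mulf_neq0.
  have v6 : v 6 = 0 by rewrite e6 vM // v2 v3.
  set u := lam / 6.
  have hu : u != 0 by rewrite mulf_neq0 // invr_neq0.
  have vu : v u = k by rewrite vdiv // v6 vl subr0.
  set r := - b2 W / 12. set s := - a1 W / 2. set t := - (a3 W + r * a1 W) / 2.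
  have [hd0 hd1 hc] := scaled r s t hu hD (etrans hk (congr1 (fun z => z * 12) (esym vu))) hj.
  move: hd0 hd1 hc; set W' := change_coord W u r s t => hd0 hd1 hc.
  have n4 : (4 : K) != 0 by rewrite (_ : (4:K) = 2 * 2) ?mulf_neq0 // -natrM.
  have n12 : (12 : K) != 0 by rewrite (_ : (12:K) = 4 * 3) ?mulf_neq0 // -natrM.
  have e1 : a1 W' = 0 by rewrite /W' /= /s; field; rewrite ?hu ?n2.
  have e2 : a2 W' = 0 by rewrite /W' /= /s /r /b2; field; rewrite ?hu ?n2 ?n3 ?n4 ?n12.
  have e3 : a3 W' = 0 by rewrite /W' /= /t /r /b2; field; rewrite ?hu ?n2 ?n3 ?n4 ?n12.
  have ec4 : c4 W' = -48 * a4 W' by rewrite /c4 /b2 /b4 e1 e2 e3; ring.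
  have ec6 : c6 W' = -864 * a6 W' by rewrite /c6 /b2 /b4 /b6 e1 e2 e3; ring.
  have e48 : (-48 : K) = - (2 ^+ 4 * 3) by rewrite -natrX -natrM.
  have n48 : (-48 : K) != 0 by rewrite e48 oppr_eq0 mulf_neq0 ?expf_neq0.
  have v48 : v (-48) = 0 by rewrite e48 vN ?mulf_neq0 ?expf_neq0 // vM ?expf_neq0 // vX // v2 v3.
  have e864 : (-864 : K) = - (2 ^+ 5 * 3 ^+ 3) by rewrite -!natrX -natrM.
  have n864 : (-864 : K) != 0 by rewrite e864 oppr_eq0 mulf_neq0 ?expf_neq0.
  have v864 : v (-864) = 0 by rewrite e864 vN ?mulf_neq0 ?expf_neq0 // vM ?expf_neq0 // !vX // v2 v3.
  have i4 : integ v (a4 W').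
    have -> : a4 W' = c4 W' / (-48) by rewrite ec4 mulrC mulKf.
    exact: integ_div.
  have hc6 : integ v (c6 W').
    apply: integ_sq. have -> : c6 W' ^+ 2 = c4 W' ^+ 3 - 1728 * disc W'.
      by rewrite -c4c6; ring.
    apply: integB; first exact: integX.
    apply: integM; first exact: integn.
    by rewrite integP // hd1.
  have i6 : integ v (a6 W').
    have -> : a6 W' = c6 W' / (-864) by rewrite ec6 mulrC mulKf.
    exact: integ_div.
  exists W'; split; first by exists u, r, s, t.
  split; last by split.
  by rewrite /integral_model e1 e2 e3; apply/and5P; split => //; rewrite /in_valring eqxx.
- have [n2 v2] := resid_unit h2.
  set s := - a1 W / 2.
  have [hd0 hd1 hc] := scaled x0 s y0 hl hD (etrans hk (congr1 (fun z => z * 12) (esym vl))) hj.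
  move: hd0 hd1 hc; set W' := change_coord W lam x0 s y0 => hd0 hd1 hc.
  have e1 : a1 W' = 0 by rewrite /W' /= /s; field; rewrite ?hl ?n2.
  have e3 : a3 W' = 0.
    rewrite /W' /=.
    have -> : a3 W + x0 * a1 W + 2 * y0 = - ((- y0 - a1 W * x0 - a3 W) - y0) by ring.
    by move: hneg; rewrite /neg_y => ->; rewrite subrr oppr0 mul0r.
  have e6 : a6 W' = 0.
    rewrite /W' /=.
    have -> : a6 W + x0 * a4 W + x0 ^+ 2 * a2 W + x0 ^+ 3 - y0 * a3 W - y0 ^+ 2 - x0 * y0 * a1 W
       = (x0 ^+ 3 + a2 W * x0 ^+ 2 + a4 W * x0 + a6 W) - (y0 ^+ 2 + a1 W * x0 * y0 + a3 W * y0) by ring.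
    by rewrite -(eqP hon) subrr mul0r.
  set a := a2 W' in hc hd0 hd1 *. set b := a4 W' in hc hd0 hd1 *.
  have ec4 : c4 W' = 16 * (a ^+ 2 - 3 * b).
 by rewrite /c4 /b2 /b4 e1 /a /b; ring.
  have ed : disc W' = 16 * (b ^+ 2 * (a ^+ 2 - 4 * b)) by rewrite /disc /b2 /b4 /b6 /b8 e1 e3 e6 /a /b; ring.
  have e16 : (16 : K) = 2 ^+ 4 by rewrite -natrX.
  have n16 : (16 : K) != 0 by rewrite e16 expf_neq0.
  have v16 : v 16 = 0 by rewrite e16 vX // v2.
  have hA : integ v (a ^+ 2 - 3 * b).
    have -> : a ^+ 2 - 3 * b = c4 W' / 16 by rewrite ec4 [16 * _]mulrC mulfK.
    exact: integ_div.
  move: hA; set A := a ^+ 2 - 3 * b => hA.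
  have eD : b ^+ 2 * (a ^+ 2 - 4 * b) = disc W' / 16 by rewrite ed [16 * _]mulrC mulfK.
  have nD : b ^+ 2 * (a ^+ 2 - 4 * b) != 0 by rewrite eD mulf_neq0 // invr_neq0.
  have vD : v (b ^+ 2 * (a ^+ 2 - 4 * b)) = 0 by rewrite eD vdiv // hd1 v16.
  have ec : a ^+ 2 - 4 * b = - b + A by rewrite /A; ring.
  move: nD vD; rewrite ec; set c := - b + A => nD vD.
  have nb : b != 0 by move: nD; rewrite mulf_eq0 negb_or expf_eq0 /= => /andP [].
  have nc : c != 0 by move: nD; rewrite mulf_eq0 negb_or => /andP [].
  have ib : integ v b.
    rewrite integP //; rewrite leNgt; apply/negP => hb.
    have vc : v c = v b.
      rewrite /c; have [->|nA] := eqVneq A 0; first by rewrite addr0 vN.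
      have nb' : - b != 0 by rewrite oppr_eq0.
      have hlt : v (- b) < v A.
        rewrite vN //. move: hA; rewrite integP // => hA'. exact: lt_le_trans hb hA'.
      have [_ ->] := v_strict nb' nA hlt. by rewrite vN.
    move: vD; rewrite vM ?expf_neq0 // vX // vc. lia.
  have ic : integ v c by rewrite /c; apply: integD => //; apply: integN.
  have ia : integ v a.
    apply: integ_sq. have -> : a ^+ 2 = c + 4 * b by rewrite /c /A; ring.
    apply: integD => //; apply: integM => //; exact: integn.
  exists W'; split; first by exists lam, x0, s, y0.
  split; last by split.
  rewrite /integral_model e1 e3 e6; apply/and5P; split => //; rewrite /in_valring eqxx //.
Qed.
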